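(* Let $\alpha>0$ be an ordinal, let $X$ be a topological space, let $Y$ be a regular-$U(\alpha)$-space, let $S$ be a dense subset of $X$ and let $f:S\to Y$ be continuous. Then the following are equivalent: (1) $f$ has a continuous extension to $X$; (2) for every family $\{A_\beta\}$ of closed subsets of $Y$ with $\bigcap_\beta A_\beta=\emptyset$ one has $\bigcap_\beta\overline{f^{-1}(A_\beta)}=\emptyset$ (closures in $X$).
   Context: For a subset $A$ of a space $Z$ and an ordinal $\alpha>0$, an $\alpha$-hull of $A$ is an open set $U\supseteq A$ for which there exists a family $\{U_\beta\}_{\beta\le\alpha}$ of open sets containing $A$ with $\mathrm{cl}\,U_\beta\subseteq U_{\beta+1}$ whenever $\beta+1\le\alpha$ and $U=U_\alpha=\bigcup_{\beta\le\alpha}U_\beta$. $Z$ is a regular-$U(\alpha)$-space if for every point $x$ and closed set $F$ with $x\notin F$ there are an $\alpha$-hull $U_x$ of $x$ and an $\alpha$-hull $U_F$ of $F$ with $\overline{U_x}\cap\overline{U_F}=\emptyset$. *)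

(* Defs.v *)
From HB Require Import structures.
From mathcomp Require Import all_boot all_order.
From mathcomp Require Import all_classical.
From mathcomp Require Import topology.
Set Implicit Arguments. Unset Strict Implicit. Unset Printing Implicit Defensive.
Local Open Scope classical_set_scope.

(* An ordinal alpha > 0 is represented by the well-ordered set [0, alpha] of
   ordinals beta <= alpha: a type with a strict, total, well-founded order
   having a greatest element [ord_top] (= alpha) which is not the least
   element (alpha > 0). Every such well-ordered set is order-isomorphic to
   [0, alpha] for a unique ordinal alpha, and conversely. *)
Record pos_ordinal := PosOrdinal {
  ord_car :> Type;
  ord_lt : ord_car -> ord_car -> Prop;
  ord_lt_irrefl : forall b, ~ ord_lt b b;
  ord_lt_trans : forall a b c, ord_lt a b -> ord_lt b c -> ord_lt a c;
  ord_lt_total : forall a b, ord_lt a b \/ a = b \/ ord_lt b a;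
  ord_lt_wf : well_founded ord_lt;
  ord_top : ord_car;
  ord_top_max : forall b, b = ord_top \/ ord_lt b ord_top;
  ord_pos : exists b, ord_lt b ord_top
}.

Definition ord_succ (W : pos_ordinal) (b c : W) : Prop :=
  @ord_lt W b c /\ forall d, @ord_lt W b d -> d = c \/ @ord_lt W c d.

(* U is an alpha-hull of A. The condition "cl U_beta ⊆ U_(beta+1) whenever
   beta + 1 <= alpha" is: for all beta, c in [0,alpha] with c = beta + 1. *)
Definition alpha_hull (W : pos_ordinal) (Z : topologicalType) (A U : set Z) : Prop :=
  open U /\ A `<=` U /\
  exists Ub : W -> set Z,
    (forall b, open (Ub b) /\ A `<=` Ub b) /\
    (forall b c, ord_succ b c -> closure (Ub b) `<=` Ub c) /\
    U = Ub (ord_top W) /\ U = \bigcup_(b in [set: W]) Ub b.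

Definition regular_U (W : pos_ordinal) (Z : topologicalType) : Prop :=
  forall (x : Z) (F : set Z), closed F -> ~ F x ->
    exists Ux UF, alpha_hull W [set x] Ux /\ alpha_hull W F UF /\
      closure Ux `&` closure UF = set0.

(* Main.v *)
Require Import Defs.
From mathcomp Require Import all_boot all_order all_classical topology.
Local Open Scope classical_set_scope.

Section Aux.
Variables (X Y : topologicalType) (S : set X) (f : X -> Y).

Definition Fx (x : X) (y : Y) : Prop :=
  forall V, nbhs x V -> closure (f @` (V `&` S)) y.

Hypothesis H2 : forall (I : Type) (A : I -> set Y),
      (forall i, closed (A i)) ->
      \bigcap_(i in [set: I]) A i = set0 ->
      \bigcap_(i in [set: I]) closure (S `&` f @^-1` A i) = set0.

Lemma Fx_ex (dS : dense S) x : exists y, Fx x y.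
Proof.
apply: contrapT => Hne.
pose I := {V : set X | nbhs x V}.
pose A := fun i : I => closure (f @` (proj1_sig i `&` S)).
have HA : \bigcap_(i in [set: I]) A i = set0.
  apply/seteqP; split => // y Hy; apply: Hne; exists y => V nV.
  exact: (Hy (exist _ V nV)).
have cA : forall i, closed (A i) by move=> i; exact: closed_closure.
have E := @H2 I A cA HA.

have : (\bigcap_(i in [set: I]) closure (S `&` f @^-1` A i)) x.
  move=> [V nV] _ B nB /=.
  have nVB : nbhs x (V `&` B) by apply: filterI.
  move: (nbhs_interior nVB) => nI.
  have [s [Is Ss]] : (V `&` B)° `&` S !=set0.
    apply: dS; first by exists x; exact: nbhs_singleton nI.
    exact: open_interior.
  have [Vs Bs] := interior_subset Is.
  exists s; split => //; split => //.
  rewrite /A /=; apply: subset_closure; exists s => //.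
by rewrite E.
Qed.

Hypothesis RU : forall (y : Y) (F : set Y), closed F -> ~ F y ->
  exists Ux UF, (open Ux /\ Ux y) /\ (open UF /\ F `<=` UF) /\
      closure Ux `&` closure UF = set0.

Lemma Q x y F : Fx x y -> closed F -> ~ F y ->
  exists UF, open UF /\ F `<=` UF /\
    exists V, nbhs x V /\ forall s, V s -> S s -> ~ UF (f s).
Proof.
move=> Fxy cF nFy.
have [Ux [UF [[oUx Uxy] [[oUF FUF] Hdis]]]] := RU y F cF nFy.
exists UF; split => //; split => //.
pose A := fun b : bool => if b then closure Ux else closure UF.
have cA : forall b, closed (A b) by case; exact: closed_closure.
have HA : \bigcap_(b in [set: bool]) A b = set0.
  apply/seteqP; split => // z Hz.
  have : (closure Ux `&` closure UF) z by split; [exact: (Hz true) | exact: (Hz false)].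
  by rewrite Hdis.
have E := @H2 bool A cA HA.
have Ht : closure (S `&` f @^-1` A true) x.
  move=> B nB.
  have := Fxy B nB Ux (open_nbhs_nbhs (conj oUx Uxy)).
  move=> [_ [[s [Bs Ss] <-] Uxfs]].
  exists s; split => //; split => //=.
  exact: subset_closure.
have Hf : ~ closure (S `&` f @^-1` A false) x.
  move=> Hf.
  have : (\bigcap_(b in [set: bool]) closure (S `&` f @^-1` A b)) x.
    by case.
  by rewrite E.
have [B [nB HB]] : exists B, nbhs x B /\ ~ ((S `&` f @^-1` A false) `&` B !=set0).
  apply: contrapT => HH; apply: Hf => B nB.
  apply: contrapT => HB; apply: HH; exists B; split => //.
exists B; split => // s Bs Ss UFfs; apply: HB; exists s; split => //; split => //=.
exact: subset_closure.
Qed.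

End Aux.

Theorem theorem3p7 (W : pos_ordinal) (X Y : topologicalType)
  (S : set X) (f : X -> Y) :
  regular_U W Y -> dense S -> {within S, continuous f} ->
  ((exists g : X -> Y, continuous g /\ forall x, S x -> g x = f x) <->
   (forall (I : Type) (A : I -> set Y),
      (forall i, closed (A i)) ->
      \bigcap_(i in [set: I]) A i = set0 ->
      \bigcap_(i in [set: I]) closure (S `&` f @^-1` A i) = set0)).
Proof.
move=> RU dS _; split.
  move=> [g [cg gf]] I A cA HA.
  apply/seteqP; split => // z Hz.
  have : (\bigcap_(i in [set: I]) A i) (g z); last by rewrite HA.
  move=> i _; apply: contrapT => nA.
  have og : open (g @^-1` (~` A i)) by apply: (proj1 (continuousP g) cg); exact: closed_openC.
  have [s [[Ss Afs] gs]] := Hz i Logic.I _ (open_nbhs_nbhs (conj og nA)).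
  by apply: gs; rewrite /= gf.
move=> H2.
have RU' : forall (y : Y) (F : set Y), closed F -> ~ F y ->
  exists Ux UF, (open Ux /\ Ux y) /\ (open UF /\ F `<=` UF) /\
      closure Ux `&` closure UF = set0.
  move=> y F cF nFy.
  have [Ux [UF [[oUx [yUx _]] [[oUF [FUF _]] Hd]]]] := RU y F cF nFy.
  exists Ux, UF; split; [split => //; exact: yUx | split => //].
have ex : forall x, exists y, @Fx X Y S f x y /\ (S x -> y = f x).
  move=> x; have [Sx|nSx] := pselect (S x).
    exists (f x); split => // V nV; apply: subset_closure; exists x => //.
    by split => //; exact: nbhs_singleton nV.
  have [y Hy] := @Fx_ex X Y S f H2 dS x.
  by exists y; split.
have [g Hg] := choice ex.
exists g; split; last by move=> x Sx; exact: (proj2 (Hg x)).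
apply/continuousP => O oO.
rewrite openE => x Ogx.
have cF : closed (~` O) by exact: open_closedC.
have nF : ~ (~` O) (g x) by [].
have [UF [oUF [FUF [V [nV HV]]]]] := @Q X Y S f H2 RU' x (g x) _ (proj1 (Hg x)) cF nF.
have nI := nbhs_interior nV.
rewrite /interior; apply: filterS nI => z Iz.
have nz : nbhs z (V°) by apply: open_nbhs_nbhs; split => //; exact: open_interior.
have Hc := proj1 (Hg z) _ nz.
apply: contrapT => nO.
have := Hc UF (open_nbhs_nbhs (conj oUF (FUF _ nO))).
move=> [_ [[s [Is Ss] <-] UFfs]].
exact: (HV s (interior_subset Is) Ss UFfs).
Qed.
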